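(* Let $A$ be a Noetherian ring, $X=\mathrm{Spec}(A)$, $I=(f_1,\dots,f_n)\subseteq A$, $Z=V(I)$, $U=X\setminus Z$, $\widehat{A}$ the $I$-adic completion, $\mathfrak{X}=\mathrm{Spf}(\widehat{A})$ and $\mathfrak{X}^{\mathrm{ad}}=\mathrm{Spa}(\widehat{A},\widehat{A})$. Let $\sigma\colon\mathfrak{X}^{\mathrm{ad}}\to X$ send a continuous valuation $\nu$ to the prime $\{a\in A:\nu(a)=0\}$, let $U_i=D(f_i)$, $W_i=\sigma^{-1}(U_i)$ and $W=\sigma^{-1}(U)$. For a multi-index $\alpha\in\mathbb{Z}_{\ge0}^n$ put $f^{\alpha}=\prod_j f_j^{\alpha_j}$, and for $k\ge 0$ let \[ W_{i,k}=R_{\mathfrak{X}^{\mathrm{ad}}}\Big(\frac{\{f_i\}\cup\{f^{\alpha}\}_{|\alpha|=k,\ \alpha_i=0}}{f_i}\Big). \] Then $W_i=\bigcup_k W_{i,k}$ for each $i$; in particular \[ W=\bigcup_{i\le n}W_i=\bigcup_{i\le n}\bigcup_k W_{i,k}. \]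
   Context: For a finite subset $T\subseteq\widehat{A}$ generating an open ideal and $s\in\widehat{A}$, the rational subset is $R_{\mathfrak{X}^{\mathrm{ad}}}(T/s)=\{\nu\in\mathrm{Spa}(\widehat{A},\widehat{A}):\nu(t)\le\nu(s)\ \forall t\in T,\ \nu(s)\neq0\}$; here $|\alpha|=\sum_j\alpha_j$. The map $\sigma$ is the composite of the adification of $\mathfrak{X}\to X$ with the support morphism $\mathrm{Spa}(A,A)\to\mathrm{Spec}(A)$. *)

(* Defs.v *)
From HB Require Import structures.
From mathcomp Require Import all_boot all_order all_algebra.
Set Implicit Arguments. Unset Strict Implicit. Unset Printing Implicit Defensive.
Import GRing.Theory.
Local Open Scope ring_scope.

Definition is_ideal (R : comPzRingType) (P : R -> Prop) : Prop :=
  [/\ P 0, (forall x y, P x -> P y -> P (x + y)) & (forall r x, P x -> P (r * x))].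

Definition in_ideal_gen (R : comPzRingType) (m : nat) (g : 'I_m -> R) (x : R) : Prop :=
  exists c : 'I_m -> R, x = \sum_(j < m) c j * g j.

Definition noetherian (R : comPzRingType) : Prop :=
  forall P : R -> Prop, is_ideal P ->
    exists s : seq R, forall x, P x <-> in_ideal_gen (fun j : 'I_(size s) => s`_j) x.

Inductive in_pow (R : comPzRingType) (J : R -> Prop) : nat -> R -> Prop :=
| in_pow0 x : in_pow J 0 x
| in_powS k a b : J a -> in_pow J k b -> in_pow J k.+1 (a * b)
| in_pow_zero k : in_pow J k 0
| in_pow_add k x y : in_pow J k x -> in_pow J k y -> in_pow J k (x + y).

Definition ideal_of (A : comPzRingType) (n : nat) (f : 'I_n -> A) : A -> Prop :=
  in_ideal_gen f.
Definition ext_ideal (A Ahat : comPzRingType) (iota : {rmorphism A -> Ahat})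
  (n : nat) (f : 'I_n -> A) : Ahat -> Prop :=
  in_ideal_gen (fun j => iota (f j)).

(* iota : A -> Ahat is an I-adic completion of A:
   A/I^k -> Ahat/(I Ahat)^k is bijective for every k, and Ahat is
   separated and complete for the (I Ahat)-adic topology. *)
Definition is_adic_completion (A Ahat : comPzRingType) (iota : {rmorphism A -> Ahat})
  (n : nat) (f : 'I_n -> A) : Prop :=
  let I := ideal_of f in
  let J := ext_ideal iota f in
  [/\ (forall k (y : Ahat), exists x : A, in_pow J k (y - iota x)),
      (forall k (x : A), in_pow J k (iota x) -> in_pow I k x),
      (forall y : Ahat, (forall k, in_pow J k y) -> y = 0) &
      (forall u : nat -> Ahat, (forall k, in_pow J k (u k.+1 - u k)) ->
         exists y, forall k, in_pow J k (y - u k))].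

Record ordAbGroup := OrdAbGroup {
  og_car :> Type;
  og_mul : og_car -> og_car -> og_car;
  og_one : og_car;
  og_inv : og_car -> og_car;
  og_le : og_car -> og_car -> Prop;
  og_mulA : forall a b c, og_mul a (og_mul b c) = og_mul (og_mul a b) c;
  og_mulC : forall a b, og_mul a b = og_mul b a;
  og_mul1 : forall a, og_mul og_one a = a;
  og_mulV : forall a, og_mul (og_inv a) a = og_one;
  og_le_refl : forall a, og_le a a;
  og_le_trans : forall a b c, og_le a b -> og_le b c -> og_le a c;
  og_le_anti : forall a b, og_le a b -> og_le b a -> a = b;
  og_le_total : forall a b, og_le a b \/ og_le b a;
  og_le_mul : forall a b c, og_le a b -> og_le (og_mul a c) (og_mul b c)
}.

(* Gamma u {0}: None plays the role of 0 *)
Definition vle (G : ordAbGroup) (x y : option G) : Prop :=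
  match x, y with
  | None, _ => True
  | Some _, None => False
  | Some a, Some b => og_le a b
  end.
Definition vlt (G : ordAbGroup) (x y : option G) : Prop := vle x y /\ x <> y.
Definition vmul (G : ordAbGroup) (x y : option G) : option G :=
  match x, y with
  | Some a, Some b => Some (og_mul a b)
  | _, _ => None
  end.

Definition is_valuation (R : comPzRingType) (G : ordAbGroup) (v : R -> option G) : Prop :=
  [/\ v 0 = None, v 1 = Some (og_one G),
      (forall a b, v (a * b) = vmul (v a) (v b)) &
      (forall a b, vle (v (a + b)) (v a) \/ vle (v (a + b)) (v b))].

Inductive in_valgroup (R : comPzRingType) (G : ordAbGroup) (v : R -> option G) : G -> Prop :=
| vg_val a g : v a = Some g -> in_valgroup v g
| vg_one : in_valgroup v (og_one G)
| vg_mul g h : in_valgroup v g -> in_valgroup v h -> in_valgroup v (og_mul g h)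
| vg_inv g : in_valgroup v g -> in_valgroup v (og_inv g).

(* Points of Spa(Ahat, Ahat), Ahat with the (I Ahat)-adic topology:
   continuous valuations (for each gamma in Gamma_v, the additive subgroup
   {x | v x < gamma} is open, i.e. contains some (I Ahat)^k) with v <= 1 on Ahat. *)
Definition in_Spa (A Ahat : comPzRingType) (iota : {rmorphism A -> Ahat})
  (n : nat) (f : 'I_n -> A) (G : ordAbGroup) (v : Ahat -> option G) : Prop :=
  [/\ is_valuation v,
      (forall g : G, in_valgroup v g ->
         exists k, forall x, in_pow (ext_ideal iota f) k x -> vlt (v x) (Some g)) &
      (forall x : Ahat, vle (v x) (Some (og_one G)))].

Definition in_rational (R : comPzRingType) (G : ordAbGroup) (v : R -> option G)
  (T : R -> Prop) (s : R) : Prop :=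
  (forall t, T t -> vle (v t) (v s)) /\ v s <> None.

Definition fpow (A : comPzRingType) (n : nat) (f : 'I_n -> A) (alpha : 'I_n -> nat) : A :=
  \prod_(j < n) f j ^+ alpha j.

Definition Wgens (A Ahat : comPzRingType) (iota : {rmorphism A -> Ahat})
  (n : nat) (f : 'I_n -> A) (i : 'I_n) (k : nat) : Ahat -> Prop :=
  fun t => t = iota (f i) \/
    exists alpha : 'I_n -> nat,
      [/\ (\sum_(j < n) alpha j)%N = k, alpha i = 0%N & t = iota (fpow f alpha)].

Definition sigma (A Ahat : comPzRingType) (iota : {rmorphism A -> Ahat})
  (G : ordAbGroup) (v : Ahat -> option G) : A -> Prop :=
  fun a => v (iota a) = None.

Definition inD (A : comPzRingType) (p : A -> Prop) (g : A) : Prop := ~ p g.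
Definition inU (A : comPzRingType) (n : nat) (f : 'I_n -> A) (p : A -> Prop) : Prop :=
  ~ (forall x, ideal_of f x -> p x).

(* Main.v *)
Require Import Defs.
From mathcomp Require Import all_boot all_order all_algebra.
From Stdlib Require Import Classical.
Import GRing.Theory.
Local Open Scope ring_scope.

Section H.
Variables (R : comPzRingType) (m : nat) (g : 'I_m -> R).
Local Notation J := (in_ideal_gen g).

Lemma J_mul {r x} : J x -> J (r * x).
Proof.
case=> c ->; exists (fun j => r * c j); rewrite mulr_sumr.
by apply: eq_bigr => j _; rewrite mulrA.
Qed.

Lemma J_gen j : J (g j).
Proof.
exists (fun k => if k == j then 1 else 0).
rewrite (bigD1 j) //= eqxx mul1r big1 ?addr0 // => k /negbTE ->; by rewrite mul0r.
Qed.

Lemma pow_mull k r y : in_pow J k y -> in_pow J k (r * y).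
Proof.
elim=> {k y}.
- move=> x; exact: in_pow0.
- move=> k a b Ja Hb _; rewrite mulrA; exact: (in_powS (J_mul Ja) Hb).
- move=> k; rewrite mulr0; exact: in_pow_zero.
- move=> k x y _ IHx _ IHy; rewrite mulrDr; exact: in_pow_add.
Qed.

Lemma pow_mul k l x y : in_pow J k x -> in_pow J l y -> in_pow J (k + l) (x * y).
Proof.
move=> H Hy; elim: H.
- move=> x0; rewrite add0n; exact: pow_mull.
- move=> k0 a b Ja _ IH; rewrite -mulrA addSn; exact: in_powS.
- move=> k0; rewrite mul0r; exact: in_pow_zero.
- move=> k0 x0 y0 _ IHx _ IHy; rewrite mulrDl; exact: in_pow_add.
Qed.

Lemma pow_gen j e : in_pow J e (g j ^+ e).
Proof.
elim: e => [|e IH]; first exact: in_pow0.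
rewrite exprS; apply: in_powS => //; exact: J_gen.
Qed.

Lemma pow_prod (alpha : 'I_m -> nat) :
  in_pow J (\sum_(j < m) alpha j)%N (\prod_(j < m) g j ^+ alpha j).
Proof.
apply: (big_ind2 (fun (k : nat) (x : R) => in_pow J k x)).
- exact: in_pow0.
- move=> a1 a2 b1 b2 H1 H2; exact: pow_mul.
- move=> j _; exact: pow_gen.
Qed.
End H.

Lemma val_sum_none (R : comPzRingType) (G : ordAbGroup) (v : R -> option G)
  (I : Type) (r : seq I) (F : I -> R) :
  is_valuation v -> (forall i, v (F i) = None) -> v (\sum_(i <- r) F i) = None.
Proof.
case=> v0 _ _ vadd HF.
apply: (big_ind (fun x => v x = None)) => //.
move=> x y Hx Hy; case: (vadd x y); rewrite ?Hx ?Hy; by case: (v (x + y)).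
Qed.

Theorem proposition5p3 (A Ahat : comPzRingType) (n : nat) (f : 'I_n -> A)
  (iota : {rmorphism A -> Ahat}) :
  noetherian A -> is_adic_completion iota f ->
  forall (G : ordAbGroup) (v : Ahat -> option G), in_Spa iota f v ->
  (forall i : 'I_n,
     inD (sigma iota v) (f i) <->
     exists k : nat, in_rational v (Wgens iota f i k) (iota (f i))) /\
  (inU f (sigma iota v) <-> exists i : 'I_n, inD (sigma iota v) (f i)) /\
  (inU f (sigma iota v) <->
     exists (i : 'I_n) (k : nat), in_rational v (Wgens iota f i k) (iota (f i))).
Proof.
move=> _ _ G v [Hval Hcont _].
have P1 : forall i : 'I_n,
     inD (sigma iota v) (f i) <->
     exists k : nat, in_rational v (Wgens iota f i k) (iota (f i)).
  move=> i; split; last by case=> k [_ H].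
  rewrite /inD /sigma => Hne.
  case E: (v (iota (f i))) => [gam|]; last by [].
  have [k Hk] := Hcont gam (vg_val E).
  exists k; split; last by rewrite E.
  move=> t [->|[alpha [Hs _ ->]]]; first by rewrite E; exact: og_le_refl.
  rewrite E; have [] := Hk (iota (fpow f alpha)) => //.
  have -> : iota (fpow f alpha) = \prod_(j < n) iota (f j) ^+ alpha j.
    by rewrite /fpow rmorph_prod; apply: eq_bigr => j _; rewrite rmorphXn.
  rewrite -Hs /ext_ideal. exact: pow_prod.
have P2 : inU f (sigma iota v) <-> exists i : 'I_n, inD (sigma iota v) (f i).
  split.
  - move=> HU; apply: NNPP => Hn; apply: HU => x [c ->].
    rewrite /sigma rmorph_sum; apply: val_sum_none => // j.
    case: Hval => _ _ vmulE _; rewrite rmorphM vmulE.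
    have -> : v (iota (f j)) = None by apply: NNPP => Hj; apply: Hn; exists j.
    by case: (v _).
  - case=> i Hi HU; apply: Hi; apply: HU; exact: J_gen.
split => //; split => //.
rewrite P2; split.
- by case=> i /P1 [k H]; exists i, k.
- by case=> i [k H]; exists i; apply/P1; exists k.
Qed.
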